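(* Let $H$ be a complex Hilbert space and let $A$ and $B$ be densely defined symmetric operators in $H$ with $D(A)=D(B)$. If $A+iB\subset 0$ (i.e. $Ax+iBx=0$ for all $x\in D(A)=D(B)$), then $A\subset 0$ and $B\subset 0$ (i.e. $A$ and $B$ vanish on their domain). If moreover $A$ (or $B$) is closed, then $A=B=0$ everywhere on $H$.
   Context: A densely defined operator $S$ is symmetric if $S\subset S^*$. For operators $S,T$, $S\subset T$ means $D(S)\subset D(T)$ and $S=T$ on $D(S)$; $0$ denotes the zero operator defined on all of $H$. The sum $A+iB$ is defined on $D(A)\cap D(B)$. *)

(* Defs.v *)
From mathcomp Require Import all_boot all_algebra.
From mathcomp Require Import boolp classical_sets reals.
From mathcomp.real_closed Require Import complex.
Set Implicit Arguments. Unset Strict Implicit. Unset Printing Implicit Defensive.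
Import GRing.Theory Num.Theory.
Local Open Scope ring_scope.
Local Open Scope classical_set_scope.

Section Hilbert.
Variables (R : realType) (H : lmodType R[i]).

Definition ip_norm (ip : H -> H -> R[i]) (x : H) : R := Num.sqrt (complex.Re (ip x x)).

Definition ip_cvg (ip : H -> H -> R[i]) (u : nat -> H) (x : H) : Prop :=
  forall e : R, 0 < e -> exists N : nat, forall n : nat, (N <= n)%N ->
    ip_norm ip (u n - x) < e.

Definition ip_cauchy (ip : H -> H -> R[i]) (u : nat -> H) : Prop :=
  forall e : R, 0 < e -> exists N : nat, forall m n : nat, (N <= m)%N -> (N <= n)%N ->
    ip_norm ip (u m - u n) < e.

Record hilbert_space := HilbertSpace {
  ip : H -> H -> R[i];
  ip_linl : forall (a : R[i]) (x y z : H), ip (a *: x + y) z = a * ip x z + ip y z;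
  ip_conj : forall x y : H, ip y x = ((ip x y)^*)%C;
  ip_ge0 : forall x : H, 0 <= ip x x;
  ip_eq0 : forall x : H, ip x x = 0 -> x = 0;
  ip_complete : forall u : nat -> H, ip_cauchy ip u -> exists x : H, ip_cvg ip u x
}.

(* A (possibly unbounded) operator in H: a domain and an action on it
   (values outside the domain are irrelevant). *)
Record op := Op { dom : set H; app : H -> H }.

Definition linear_op (S : op) : Prop :=
  dom S 0 /\
  (forall (a : R[i]) (x y : H), dom S x -> dom S y -> dom S (a *: x + y)) /\
  (forall (a : R[i]) (x y : H), dom S x -> dom S y ->
      app S (a *: x + y) = a *: app S x + app S y).

Definition densely_defined (Hs : hilbert_space) (S : op) : Prop :=
  forall x : H, exists u : nat -> H, (forall n, dom S (u n)) /\ ip_cvg (ip Hs) u x.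

Definition adjoint (Hs : hilbert_space) (S : op) : op :=
  Op [set y | exists z : H, forall x, dom S x -> ip Hs (app S x) y = ip Hs x z]
     (fun y => xget 0 [set z | forall x, dom S x -> ip Hs (app S x) y = ip Hs x z]).

Definition op_sub (S T : op) : Prop :=
  dom S `<=` dom T /\ (forall x, dom S x -> app S x = app T x).

Definition op_eq (S T : op) : Prop := op_sub S T /\ op_sub T S.

(* symmetric: S ⊂ S^* (density is required separately) *)
Definition symmetric_op (Hs : hilbert_space) (S : op) : Prop :=
  op_sub S (adjoint Hs S).

Definition zero_op : op := Op setT (fun _ => 0).

Definition op_add (S T : op) : op := Op (dom S `&` dom T) (fun x => app S x + app T x).
Definition op_scale (c : R[i]) (S : op) : op := Op (dom S) (fun x => c *: app S x).

Definition closed_op (Hs : hilbert_space) (S : op) : Prop :=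
  forall (u : nat -> H) (x y : H), (forall n, dom S (u n)) ->
    ip_cvg (ip Hs) u x -> ip_cvg (ip Hs) (fun n => app S (u n)) y ->
    dom S x /\ app S x = y.

End Hilbert.

(* Main.v *)
Require Import Defs.
From mathcomp Require Import all_boot all_algebra.
From mathcomp Require Import boolp classical_sets reals.
From mathcomp.real_closed Require Import complex.
From mathcomp Require Import order.
Import Order.TTheory GRing.Theory Num.Theory.
Local Open Scope ring_scope.

Section Aux.
Variables (R : realType) (H : lmodType R[i]) (Hs : hilbert_space H).
Local Notation ipp := (ip Hs).

Lemma ip0l z : ipp 0 z = 0.
Proof.
have := ip_linl Hs 1 0 0 z; rewrite scaler0 addr0 mul1r => /eqP.
by rewrite -subr_eq subrr eq_sym => /eqP.
Qed.

Lemma ipZl a x z : ipp (a *: x) z = a * ipp x z.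
Proof. by have := ip_linl Hs a x 0 z; rewrite addr0 ip0l addr0. Qed.

Lemma ipDl x y z : ipp (x + y) z = ipp x z + ipp y z.
Proof. by have := ip_linl Hs 1 x y z; rewrite scale1r mul1r. Qed.

Lemma ipBl x y z : ipp (x - y) z = ipp x z - ipp y z.
Proof. by rewrite ipDl -scaleN1r ipZl mulN1r. Qed.

Lemma ip0r z : ipp z 0 = 0.
Proof. by rewrite ip_conj ip0l conjc0. Qed.

Lemma ipZr a x z : ipp z (a *: x) = (a^*)%C * ipp z x.
Proof. by rewrite ip_conj ipZl rmorphM /= -ip_conj. Qed.

Lemma ipBr x y z : ipp z (x - y) = ipp z x - ipp z y.
Proof. by rewrite ip_conj ipBl rmorphB /= -!ip_conj. Qed.

Lemma sym_ip (S : op H) x y : symmetric_op Hs S -> dom S x -> dom S y ->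
  ipp (app S x) y = ipp x (app S y).
Proof.
move=> [Hd Ha] Dx Dy.
rewrite (Ha y Dy) /=.
have := Hd y Dy => /= Hex.
by have := xgetPex 0 Hex => /(_ x Dx).
Qed.

Lemma dense_zero (D : set H) (u : nat -> H) v :
  (forall n, D (u n)) -> ip_cvg ipp u v -> (forall y, D y -> ipp v y = 0) -> v = 0.
Proof.
move=> Du cv orth.
apply: (@ip_eq0 _ _ Hs v).
have a0 := ip_ge0 Hs v.
move: (a0); rewrite lecE => /andP [/eqP ImE ReE].
have [Re0|Rep] := eqVneq (complex.Re (ipp v v)) 0.
  by move: ImE Re0; case: (ipp v v) => a b /= -> /= ->.
have Repos : 0 < complex.Re (ipp v v) by rewrite lt0r Rep ReE.
have [N HN] := cv (Num.sqrt (complex.Re (ipp v v))) ltac:(by rewrite sqrtr_gt0).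
have := HN N (leqnn N); rewrite /ip_norm ltr_sqrt // => Hlt.
have E : ipp (u N - v) (u N - v) = ipp (u N) (u N) + ipp v v.
  rewrite ipBl !ipBr (orth _ (Du N)) [ipp (u N) v]ip_conj (orth _ (Du N)) conjc0.
  by rewrite !subr0 sub0r opprK.
have : ipp v v <= ipp (u N - v) (u N - v) by rewrite E lerDr ip_ge0.
rewrite lecE => /andP [_ Hle].
by move: (lt_le_trans Hlt Hle); rewrite ltxx.
Qed.

End Aux.

Theorem proposition2p6 (R : realType) (H : lmodType R[i]) (Hs : hilbert_space H)
    (A B : op H) :
  linear_op A -> linear_op B ->
  densely_defined Hs A -> densely_defined Hs B ->
  symmetric_op Hs A -> symmetric_op Hs B ->
  dom A = dom B ->
  op_sub (op_add A (op_scale 'i%C B)) (zero_op H) ->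
  (op_sub A (zero_op H) /\ op_sub B (zero_op H)) /\
  (closed_op Hs A \/ closed_op Hs B -> op_eq A (zero_op H) /\ op_eq B (zero_op H)).
Proof.
move=> linA linB dA dB sA sB eD [_ Hsum].
have sumE x : dom A x -> app A x + 'i%C *: app B x = 0.
  move=> Dx; have := Hsum x; rewrite /= => ->//; split=> //; by rewrite -eD.
have BE x : dom A x -> app B x = 'i%C *: app A x.
  move=> Dx; have := sumE x Dx => /eqP; rewrite addr_eq0 => /eqP ->.
  by rewrite scalerN scalerA -expr2 sqr_i scaleN1r opprK.
have AE x : dom A x -> app A x = (- 'i%C) *: app B x.
  by move=> Dx; have := sumE x Dx => /eqP; rewrite addr_eq0 scaleNr => /eqP.
have orth x y : dom A x -> dom A y -> ip Hs (app A x) y = 0.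
  move=> Dx Dy.
  have e1 : ip Hs (app A x) y = - ip Hs (app A x) y.
    have DxB : dom B x by rewrite -eD.
    have DyB : dom B y by rewrite -eD.
    rewrite {1}(AE x Dx) ipZl (@sym_ip _ _ Hs B x y sB DxB DyB) (BE y Dy) ipZr.
    rewrite -(@sym_ip _ _ Hs A x y sA Dx Dy).
    rewrite (_ : ('i^*)%C = - 'i%C); last by apply/eqP; rewrite eq_complex /= oppr0 !eqxx.
    by rewrite mulrA mulrNN -expr2 sqr_i mulN1r.
  have : 2%:R * ip Hs (app A x) y = 0.
    by rewrite mulr2n mulrDl mul1r {1}e1 addNr.
  move/eqP; rewrite mulf_eq0 => /orP [|/eqP //].
  by rewrite pnatr_eq0.
have A0 x : dom A x -> app A x = 0.
  move=> Dx; have [u [Du cu]] := dA (app A x).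
  by apply: (@dense_zero _ _ Hs _ _ _ Du cu) => y Dy; apply: orth.
have B0 x : dom A x -> app B x = 0.
  by move=> Dx; rewrite BE // A0 // scaler0.
have subA : op_sub A (zero_op H) by split=> // x Dx; rewrite A0.
have subB : op_sub B (zero_op H) by split=> // x Dx; rewrite B0 // eD.
split; first by [].
move=> cl.
have cv0 (f : nat -> H) : (forall n, f n = 0) -> ip_cvg (ip Hs) f 0.
  move=> f0 e e0; exists 0%N => n _; rewrite f0 /ip_norm subr0 ip0l.
  by rewrite (_ : complex.Re 0 = 0) // sqrtr0.
have allD x : dom A x.
  have [u [Du cu]] := dA x.
  case: cl => [cA|cB].
    by have [] := cA u x 0 Du cu (cv0 _ (fun n => A0 _ (Du n))).
  have Du' n : dom B (u n) by rewrite -eD.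
  have [] := cB u x 0 Du' cu (cv0 _ (fun n => B0 _ (Du n))).
  by rewrite eD.
split; split=> //; split=> // x _ /=.
- by rewrite A0.
- by rewrite -eD.
- by rewrite B0.
Qed.
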